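(* Let $(X,f)$ be a dynamical system and $\mathbf{a}=(a_1,\dots,a_r)\in\mathbb{N}^r_*$. The following are equivalent: (1) $(X,f)$ is multi-minimal with respect to $\mathbf{a}$, i.e. $(X^r,f^{a_1}\times\dots\times f^{a_r})$ is minimal; (2) $(X,f)$ is $\mathcal{F}_s[\mathbf{a}]$-point transitive; (3) $Trans_{\mathcal{F}_s[\mathbf{a}]}(X,f)=X$. Consequently (taking all $\mathbf{a}=(1,2,\dots,i)$), the following are also equivalent: (1') $(X,f)$ is multi-minimal; (2') $(X,f)$ is $\mathcal{F}_s[\infty]$-point transitive; (3') $Trans_{\mathcal{F}_s[\infty]}(X,f)=X$.
   Context: A dynamical system is a pair $(X,f)$ with $X$ a compact metric space and $f:X\to X$ continuous. $\mathbb{N}=\{1,2,\dots\}$, $\mathbb{Z}_+=\{0,1,2,\dots\}$, $\mathbb{N}^r_*=\{(n_1,\dots,n_r)\in\mathbb{N}^r: n_1<\dots<n_r\}$. A system is minimal if it has no proper non-empty closed invariant subset; $(X,f)$ is multi-minimal if $(X^n,f\times f^2\times\dots\times f^n)$ is minimal for every $n\in\mathbb{N}$. $N(x,U)=\{n\in\mathbb{N}: f^n(x)\in U\}$. For a family $\mathcal{F}$ of subsets of $\mathbb{N}$, $x$ is an $\mathcal{F}$-transitive point if $N(x,U)\in\mathcal{F}$ for every non-empty open $U\subset X$; $Trans_{\mathcal{F}}(X,f)$ is the set of such points, and $(X,f)$ is $\mathcal{F}$-point transitive if it is non-empty. A set $F\subset\mathbb{N}$ is syndetic if there is $N$ with $\{n,\dots,n+N\}\cap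 F\ne\emptyset$ for all $n\in\mathbb{N}$. For $\mathbf{a}\in\mathbb{N}^r$, $\mathcal{F}_s[\mathbf{a}]$ is the collection of $F\subset\mathbb{N}$ such that for every $n_1,\dots,n_r\in\mathbb{Z}_+$ there is a syndetic set $F'\subset\mathbb{N}$ with $a_iF'+n_i=\{a_im+n_i:m\in F'\}\subset F$ for all $i=1,\dots,r$. $\mathcal{F}_s[\infty]=\bigcap_{i=1}^\infty\mathcal{F}_s[(1,2,\dots,i)]$. *)

(* Defs.v *)
From Stdlib Require Import Reals List.
Open Scope R_scope.

Section Dyn.
Variable M : Metric_Space.
Local Notation X := (Base M).
Local Notation d := (dist M).

Definition is_open (U : X -> Prop) : Prop :=
  forall x, U x -> exists eps, eps > 0 /\ forall y, d x y < eps -> U y.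

Definition compact_space : Prop :=
  forall (I : Type) (U : I -> X -> Prop),
    (forall i, is_open (U i)) -> (forall x, exists i, U i x) ->
    exists l : list I, forall x, exists i, In i l /\ U i x.

Definition continuous_map (f : X -> X) : Prop :=
  forall x eps, eps > 0 -> exists delta, delta > 0 /\
    forall y, d x y < delta -> d (f x) (f y) < eps.

Definition hitting_set (f : X -> X) (x : X) (U : X -> Prop) : nat -> Prop :=
  fun n => (1 <= n)%nat /\ U (Nat.iter n f x).

Definition F_transitive_point (F : (nat -> Prop) -> Prop) (f : X -> X) (x : X) : Prop :=
  forall U, is_open U -> (exists y, U y) -> F (hitting_set f x U).

Definition F_point_transitive (F : (nat -> Prop) -> Prop) (f : X -> X) : Prop :=
  exists x, F_transitive_point F f x.

Definition Trans_is_whole (F : (nat -> Prop) -> Prop) (f : X -> X) : Prop :=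
  forall x, F_transitive_point F f x.

(* The product X^r, indexed by {0,...,r-1} *)
Definition idx (r : nat) := {i : nat | (i < r)%nat}.

Definition prod_open (r : nat) (W : (idx r -> X) -> Prop) : Prop :=
  forall x, W x -> exists eps, eps > 0 /\
    forall y, (forall i, d (x i) (y i) < eps) -> W y.

Definition prod_map (f : X -> X) (r : nat) (a : nat -> nat) : (idx r -> X) -> (idx r -> X) :=
  fun x i => Nat.iter (a (proj1_sig i)) f (x i).

Definition multi_minimal_wrt (f : X -> X) (r : nat) (a : nat -> nat) : Prop :=
  forall A : (idx r -> X) -> Prop,
    prod_open r (fun x => ~ A x) ->
    (forall x, A x -> A (prod_map f r a x)) ->
    (exists x, A x) ->
    forall x, A x.

Definition multi_minimal (f : X -> X) : Prop :=
  forall n, (1 <= n)%nat -> multi_minimal_wrt f n (fun i => S i).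

End Dyn.

Definition syndetic (F : nat -> Prop) : Prop :=
  (forall m, F m -> (1 <= m)%nat) /\
  exists N, forall n, (1 <= n)%nat -> exists k, (n <= k <= n + N)%nat /\ F k.

(* a = (a_1,...,a_r) in N^r_* : coordinates a 0, ..., a (r-1) *)
Definition strictly_incr_pos (r : nat) (a : nat -> nat) : Prop :=
  (1 <= r)%nat /\ (1 <= a 0%nat)%nat /\
  forall i, (S i < r)%nat -> (a i < a (S i))%nat.

Definition Fs (r : nat) (a : nat -> nat) (F : nat -> Prop) : Prop :=
  forall n : nat -> nat, exists F' : nat -> Prop, syndetic F' /\
    forall i m, (i < r)%nat -> F' m -> F (a i * m + n i)%nat.

Definition Fs_inf (F : nat -> Prop) : Prop :=
  forall i, (1 <= i)%nat -> Fs i (fun j => S j) F.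

(* Main.v *)
Require Import Defs.
From Stdlib Require Import Reals List.
From Stdlib Require Import Lra Lia Arith Classical ClassicalEpsilon ProofIrrelevance.
Open Scope R_scope.

Section Proofs.
Variable M : Metric_Space.
Local Notation X := (Base M).
Local Notation d := (dist M).
Variable f : X -> X.
Hypothesis Hcont : continuous_map M f.

Lemma d_refl0 x : d x x = 0.
Proof. apply (proj2 (dist_refl M x x)); reflexivity. Qed.

Lemma d_tri x y z : d x z <= d x y + d y z.
Proof. apply (dist_tri M x z y). Qed.

Lemma d_sym x y : d x y = d y x.
Proof. apply dist_sym. Qed.

Lemma ball_open c e : is_open M (fun y => d c y < e).
Proof.
  intros y Hy. exists (e - d c y). split; [lra|].
  intros z Hz. pose proof (d_tri c y z). lra.
Qed.

Lemma iter_cont n : forall x eps, eps > 0 -> exists delta, delta > 0 /\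
  forall y, d x y < delta -> d (Nat.iter n f x) (Nat.iter n f y) < eps.
Proof.
  induction n as [|n IHn]; intros x eps He.
  - exists eps; simpl; auto.
  - destruct (Hcont (Nat.iter n f x) eps He) as [d1 [Hd1 H1]].
    destruct (IHn x d1 Hd1) as [d2 [Hd2 H2]]. exists d2; split; auto.
    intros y Hy. simpl. apply H1. apply H2. exact Hy.
Qed.

Lemma fin_min_nat (P : nat -> R -> Prop) m :
  (forall j δ δ', 0 < δ' <= δ -> P j δ -> P j δ') ->
  (forall j, (j < m)%nat -> exists δ, δ > 0 /\ P j δ) ->
  exists δ, δ > 0 /\ forall j, (j < m)%nat -> P j δ.
Proof.
  intros Hmon. induction m as [|m IH]; intros H.
  - exists 1; split; [lra| intros; lia].
  - destruct IH as [δ [Hδ Hj]]. { intros; apply H; lia. }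
    destruct (H m ltac:(lia)) as [δ' [Hδ' HP]].
    exists (Rmin δ δ'). split. { apply Rmin_pos; lra. }
    intros j Hjm. destruct (Nat.eq_dec j m) as [->|Hne].
    + apply Hmon with δ'; auto. split. apply Rmin_pos; lra. apply Rmin_r.
    + apply Hmon with δ; auto. split. apply Rmin_pos; lra. apply Rmin_l.
      apply Hj; lia.
Qed.

Lemma fin_min_idx r (P : idx r -> R -> Prop) :
  (forall i δ δ', 0 < δ' <= δ -> P i δ -> P i δ') ->
  (forall i, exists δ, δ > 0 /\ P i δ) ->
  exists δ, δ > 0 /\ forall i, P i δ.
Proof.
  intros Hmon H.
  destruct (fin_min_nat (fun j δ => forall Hj : (j < r)%nat, P (exist _ j Hj) δ) r)
    as [δ [Hδ Hall]].
  - intros j δ δ' Hd HP Hj. apply Hmon with δ; auto.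
  - intros j Hj. destruct (H (exist _ j Hj)) as [δ [Hδ HP]]. exists δ. split; auto.
    intros Hj'. rewrite (proof_irrelevance _ Hj' Hj). exact HP.
  - exists δ. split; auto. intros [j Hj]. apply Hall; auto.
Qed.

Lemma idx_fun (r : nat) {B : Type} (b : B) (g : idx r -> B) :
  exists n : nat -> B, forall i, n (proj1_sig i) = g i.
Proof.
  exists (fun j => match lt_dec j r with left H => g (exist _ j H) | right _ => b end).
  intros [j Hj]. simpl. destruct (lt_dec j r) as [H|H].
  - f_equal. f_equal. apply proof_irrelevance.
  - contradiction.
Qed.

Definition clos r (e : R) (u v : idx r -> X) := forall i, d (u i) (v i) < e.

Lemma clos_sym r e u v : clos r e u v -> clos r e v u.
Proof. intros H i. rewrite d_sym. apply H. Qed.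

Lemma clos_tri r e1 e2 u v w : clos r e1 u v -> clos r e2 v w -> clos r (e1 + e2) u w.
Proof. intros H1 H2 i. pose proof (d_tri (u i) (v i) (w i)). specialize (H1 i). specialize (H2 i). lra. Qed.

Lemma Titer r a k v i :
  Nat.iter k (prod_map M f r a) v i = Nat.iter (a (proj1_sig i) * k) f (v i).
Proof.
  induction k as [|k IH].
  - rewrite Nat.mul_0_r. reflexivity.
  - rewrite Nat.iter_succ. unfold prod_map at 1. rewrite IH, <- Nat.iter_add. f_equal. lia.
Qed.

Lemma iter_comm p q z : Nat.iter p f (Nat.iter q f z) = Nat.iter q f (Nat.iter p f z).
Proof. rewrite <- !Nat.iter_add. f_equal. lia. Qed.

Lemma cont_T r a k v ε : ε > 0 -> exists δ, δ > 0 /\ forall w, clos r δ v w ->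
  clos r ε (Nat.iter k (prod_map M f r a) v) (Nat.iter k (prod_map M f r a) w).
Proof.
  intros Hε.
  destruct (fin_min_idx r (fun i δ => forall y, d (v i) y < δ ->
      d (Nat.iter (a (proj1_sig i) * k) f (v i)) (Nat.iter (a (proj1_sig i) * k) f y) < ε))
    as [δ [Hδ H]].
  - intros i δ δ' Hd HP y Hy. apply HP. lra.
  - intros i. apply iter_cont; auto.
  - exists δ. split; auto. intros w Hw i. rewrite !Titer. apply H. apply Hw.
Qed.

Lemma clos_open r c e : prod_open M r (fun w => clos r e c w).
Proof.
  intros w Hw.
  destruct (fin_min_idx r (fun i δ => δ <= e - d (c i) (w i))) as [δ [Hδ H]].
  - intros i δ δ' Hd HP. lra.
  - intros i. exists (e - d (c i) (w i)). specialize (Hw i). split; lra.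
  - exists δ. split; auto. intros y Hy i. pose proof (d_tri (c i) (w i) (y i)).
    specialize (H i). specialize (Hy i). lra.
Qed.

Lemma inv_iter r a (A : (idx r -> X) -> Prop) :
  (forall x, A x -> A (prod_map M f r a x)) ->
  forall k x, A x -> A (Nat.iter k (prod_map M f r a) x).
Proof. intros H k. induction k; intros x Hx; simpl; auto. Qed.

Lemma ur_in r a (A : (idx r -> X) -> Prop) y z :
  prod_open M r (fun x => ~ A x) -> (forall x, A x -> A (prod_map M f r a x)) -> A z ->
  (forall ε, ε > 0 -> exists F', syndetic F' /\
      forall m, F' m -> clos r ε (Nat.iter m (prod_map M f r a) y) y) ->
  (forall δ, δ > 0 -> exists m, (1 <= m)%nat /\ clos r δ (Nat.iter m (prod_map M f r a) y) z) ->
  A y.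
Proof.
  intros Hcl Hinv Hz Hur Hcl2. apply NNPP; intro Hy.
  destruct (Hcl y Hy) as [ε [Hε Hb]].
  destruct (Hur (ε/2)) as [F' [[_ [N HN]] HF']]; [lra|].
  destruct (fin_min_nat (fun j δ => forall w, clos r δ z w ->
      clos r (ε/2) (Nat.iter j (prod_map M f r a) z) (Nat.iter j (prod_map M f r a) w)) (S N))
    as [δ [Hδ Hd]].
  - intros j δ δ' Hdd HP w Hw. apply HP. intro i. specialize (Hw i). lra.
  - intros j _. apply cont_T. lra.
  - destruct (Hcl2 δ Hδ) as [m [Hm1 Hm]].
    destruct (HN m Hm1) as [k [[Hk1 Hk2] Hk]].
    specialize (Hd (k - m)%nat ltac:(lia) _ (clos_sym _ _ _ _ Hm)).
    rewrite <- Nat.iter_add in Hd. replace (k - m + m)%nat with k in Hd by lia.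
    specialize (HF' k Hk).
    assert (HA : A (Nat.iter (k - m) (prod_map M f r a) z)) by (apply inv_iter; auto).
    pose proof (clos_sym _ _ _ _ (clos_tri _ _ _ _ _ _ Hd HF')) as Hc.
    replace (ε / 2 + ε / 2) with ε in Hc by lra.
    exact (Hb _ Hc HA).
Qed.

Lemma a_pos r a : strictly_incr_pos r a -> forall i, (i < r)%nat -> (1 <= a i)%nat.
Proof.
  intros [_ [H0 H]] i. induction i as [|i IH]; intros Hi; auto.
  specialize (H i Hi). specialize (IH ltac:(lia)). lia.
Qed.

Section L2sec.
Variable r : nat.
Variable a : nat -> nat.
Hypothesis Hs : strictly_incr_pos r a.
Variable x : X.
Hypothesis Htr : F_transitive_point M (Fs r a) f x.

Local Notation T := (prod_map M f r a).
Definition yv (n : nat -> nat) : idx r -> X := fun i => Nat.iter (n (proj1_sig i)) f x.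
Local Notation Δ := (yv (fun _ => 0%nat)).

Lemma Fs_ball c δ : δ > 0 -> d c x < δ \/ True -> Fs r a (hitting_set M f x (fun z => d c z < δ)).
Proof. intros Hδ _. apply Htr. apply ball_open. exists c. rewrite d_refl0. lra. Qed.

Lemma synd_pt F' : syndetic F' -> exists m, F' m.
Proof. intros [_ [N HN]]. destruct (HN 1%nat (le_n 1)) as [k [_ Hk]]. eauto. Qed.

Lemma ur_y n : forall ε, ε > 0 -> exists F', syndetic F' /\
      forall m, F' m -> clos r ε (Nat.iter m T (yv n)) (yv n).
Proof.
  intros ε Hε.
  destruct (fin_min_idx r (fun i δ => forall z, d x z < δ ->
     d (Nat.iter (n (proj1_sig i)) f x) (Nat.iter (n (proj1_sig i)) f z) < ε)) as [δ [Hδ H]].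
  - intros i δ δ' Hd HP z Hz. apply HP. lra.
  - intros i. apply iter_cont; auto.
  - destruct (Fs_ball x δ Hδ (or_intror I) (fun _ => 0%nat)) as [F' [HF' Hm]].
    exists F'. split; auto. intros m Hm' i.
    rewrite Titer. unfold yv. rewrite iter_comm.
    destruct (Hm (proj1_sig i) m (proj2_sig i) Hm') as [_ Hin].
    rewrite Nat.add_0_r in Hin.
    rewrite d_sym. apply H. exact Hin.
Qed.

Lemma approach n : forall δ, δ > 0 -> exists m, (1 <= m)%nat /\ clos r δ (Nat.iter m T (yv n)) Δ.
Proof.
  intros δ Hδ.
  destruct (Fs_ball x δ Hδ (or_intror I) n) as [F' [HF' Hm]].
  destruct HF' as [Hpos [N HN]]. destruct (HN 1%nat (le_n 1)) as [k [_ Hk]].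
  exists k. split; [apply Hpos; auto|]. intro i.
  rewrite Titer. unfold yv. simpl. rewrite <- Nat.iter_add.
  destruct (Hm (proj1_sig i) k (proj2_sig i) Hk) as [_ Hin].
  rewrite d_sym. exact Hin.
Qed.

Definition Orb (w : idx r -> X) := forall δ, δ > 0 -> exists m, (1 <= m)%nat /\ clos r δ (Nat.iter m T Δ) w.

Lemma Orb_closed : prod_open M r (fun w => ~ Orb w).
Proof.
  intros w Hw. destruct (not_all_ex_not _ _ Hw) as [δ Hδ].
  apply imply_to_and in Hδ. destruct Hδ as [Hδ Hno].
  exists (δ/2). split; [lra|]. intros w' Hw' HO. apply Hno.
  destruct (HO (δ/2)) as [m [Hm1 Hm]]; [lra|]. exists m. split; auto.
  pose proof (clos_tri _ _ _ _ _ _ Hm (clos_sym _ _ _ _ Hw')) as Hc.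
  replace (δ/2 + δ/2) with δ in Hc by lra. exact Hc.
Qed.

Lemma Orb_inv : forall w, Orb w -> Orb (T w).
Proof.
  intros w Hw δ Hδ. destruct (cont_T r a 1 w δ Hδ) as [η [Hη Hc]].
  destruct (Hw η Hη) as [m [Hm1 Hm]]. exists (S m). split; [lia|].
  apply clos_sym. apply (Hc _ (clos_sym _ _ _ _ Hm)).
Qed.

Lemma Orb_Δ : Orb Δ.
Proof.
  intros δ Hδ. destruct (ur_y (fun _ => 0%nat) δ Hδ) as [F' [HF' Hm]].
  destruct HF' as [Hpos [N HN]]. destruct (HN 1%nat (le_n 1)) as [k [_ Hk]].
  exists k. split; auto.
Qed.

Lemma Orb_y n : Orb (yv n).
Proof.
  apply (ur_in r a Orb (yv n) Δ Orb_closed Orb_inv Orb_Δ (ur_y n) (approach n)).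
Qed.

Lemma r_pos : (0 < r)%nat.
Proof. destruct Hs; lia. Qed.

Lemma dens : forall w δ, δ > 0 -> exists n, clos r δ (yv n) w.
Proof.
  intros w δ Hδ.
  assert (H : forall i : idx r, exists p, d (w i) (Nat.iter p f x) < δ).
  { intros i. destruct (Fs_ball (w i) δ Hδ (or_intror I) (fun _ => 0%nat)) as [F' [HF' Hm]].
    destruct (synd_pt F' HF') as [k Hk].
    destruct (Hm 0%nat k r_pos Hk) as [_ Hin]. eauto. }
  set (g := fun i => proj1_sig (constructive_indefinite_description _ (H i))).
  assert (Hg : forall i, d (w i) (Nat.iter (g i) f x) < δ)
    by (intro i; exact (proj2_sig (constructive_indefinite_description _ (H i)))).
  destruct (idx_fun r 0%nat g) as [n Hn]. exists n. intro i. unfold yv.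
  rewrite Hn, d_sym. apply Hg.
Qed.

Lemma orb_dense : forall w δ, δ > 0 -> exists m, (1 <= m)%nat /\ clos r δ (Nat.iter m T Δ) w.
Proof.
  intros w δ Hδ. destruct (dens w (δ/2)) as [n Hn]; [lra|].
  destruct (Orb_y n (δ/2)) as [m [Hm1 Hm]]; [lra|].
  exists m. split; auto. pose proof (clos_tri _ _ _ _ _ _ Hm Hn) as Hc.
  replace (δ/2 + δ/2) with δ in Hc by lra. exact Hc.
Qed.

Lemma L2 : multi_minimal_wrt M f r a.
Proof.
  intros A Hcl Hinv [z Hz] w.
  assert (HΔ : A Δ).
  { apply (ur_in r a A Δ z Hcl Hinv Hz (ur_y _)). intros δ Hδ. apply orb_dense; auto. }
  apply NNPP; intro Hw. destruct (Hcl w Hw) as [ε [Hε Hb]].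
  destruct (orb_dense w ε Hε) as [m [_ Hm]].
  apply (Hb _ (clos_sym _ _ _ _ Hm)). apply inv_iter; auto.
Qed.

End L2sec.

Hypothesis Hcomp : compact_space M.

Lemma cluster (s : nat -> X) : exists x0, forall η, η > 0 -> forall N, exists k, (N <= k)%nat /\ d x0 (s k) < η.
Proof.
  apply NNPP; intro H.
  set (I := {p : X * R * nat | snd (fst p) > 0 /\ forall k, (snd p <= k)%nat -> ~ d (fst (fst p)) (s k) < snd (fst p)}).
  set (U := fun (p : I) y => d (fst (fst (proj1_sig p))) y < snd (fst (proj1_sig p))).
  destruct (Hcomp I U) as [l Hl].
  - intro p. apply ball_open.
  - intro y.
    assert (H0 : exists η N, η > 0 /\ forall k, (N <= k)%nat -> ~ d y (s k) < η).
    { apply NNPP; intro H'. apply H. exists y. intros η Hη N. apply NNPP; intro H2.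
      apply H'. exists η, N. split; auto. intros k Hk Hd. apply H2. exists k; auto. }
    destruct H0 as [η [N [Hη HN]]].
    exists (exist _ (y, η, N) (conj Hη HN) : I). unfold U; simpl. rewrite d_refl0; lra.
  - assert (H0 : exists Nm, forall p, In p l -> (snd (proj1_sig p) <= Nm)%nat).
    { clear Hl. induction l as [|p l IH].
      - exists 0%nat; intros _ [].
      - destruct IH as [Nm HNm]. exists (max Nm (snd (proj1_sig p))).
        intros q [<-|Hq]. lia. specialize (HNm q Hq). lia. }
    destruct H0 as [Nm HNm]. destruct (Hl (s Nm)) as [p [Hp Hu]].
    destruct (proj2_sig p) as [_ Hp2]. apply (Hp2 Nm (HNm p Hp)). exact Hu.
Qed.

Fixpoint psi (g : nat -> nat -> nat) (j : nat) : nat :=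
  match j with 0 => g 0%nat 0%nat | S j' => g (S j') (S (psi g j')) end.

Lemma incr_ge (φ : nat -> nat) : (forall k, (φ k < φ (S k))%nat) -> forall k, (k <= φ k)%nat.
Proof. intros H k. induction k. lia. specialize (H k). lia. Qed.

Lemma incr_strict (φ : nat -> nat) : (forall k, (φ k < φ (S k))%nat) -> forall p q, (p < q)%nat -> (φ p < φ q)%nat.
Proof.
  intros H p q Hpq. induction q. lia.
  destruct (Nat.eq_dec p q) as [->|Hne]. apply H. specialize (IHq ltac:(lia)). specialize (H q). lia.
Qed.

Lemma seq_compact (s : nat -> X) : exists ψ x0, (forall k, (ψ k < ψ (S k))%nat) /\
  forall η, η > 0 -> exists K0, forall K, (K0 <= K)%nat -> d x0 (s (ψ K)) < η.
Proof.
  destruct (cluster s) as [x0 Hx].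
  assert (Hg : forall j N, exists k, (N <= k)%nat /\ d x0 (s k) < / INR (S j)).
  { intros. apply Hx. apply Rinv_0_lt_compat, lt_0_INR; lia. }
  set (g := fun j N => proj1_sig (constructive_indefinite_description _ (Hg j N))).
  assert (Hgp : forall j N, (N <= g j N)%nat /\ d x0 (s (g j N)) < / INR (S j))
    by (intros; exact (proj2_sig (constructive_indefinite_description _ (Hg j N)))).
  exists (psi g), x0. split.
  - intro k. simpl. pose proof (proj1 (Hgp (S k) (S (psi g k)))). lia.
  - intros η Hη. destruct (archimed_cor1 η Hη) as [N [HN HN0]]. exists N. intros K HK.
    assert (H : d x0 (s (psi g K)) < / INR (S K)) by (destruct K; simpl; apply Hgp).
    eapply Rlt_le_trans; [exact H|]. apply Rle_trans with (/ INR N); [|lra].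
    apply Rinv_le_contravar. apply lt_0_INR; lia. apply le_INR; lia.
Qed.

Lemma prod_seq_compact r (u : nat -> idx r -> X) : exists φ v, (forall k, (φ k < φ (S k))%nat) /\
  forall η, η > 0 -> exists K0, forall K, (K0 <= K)%nat -> clos r η v (u (φ K)).
Proof.
  assert (H : forall m, exists φ v, (forall k, (φ k < φ (S k))%nat) /\
     forall η, η > 0 -> exists K0, forall K, (K0 <= K)%nat -> forall i : idx r,
       (proj1_sig i < m)%nat -> d (v i) (u (φ K) i) < η).
  { induction m as [|m IHm].
    - exists (fun k => k), (u 0%nat). split. intros; lia.
      intros η Hη. exists 0%nat. intros K _ i Hi. lia.
    - destruct IHm as [φ [v [Hφ Hc]]].
      destruct (lt_dec m r) as [Hm|Hm].
      + destruct (seq_compact (fun K => u (φ K) (exist _ m Hm))) as [ψ [x0 [Hψ Hc0]]].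
        exists (fun k => φ (ψ k)), (fun i => if Nat.eq_dec (proj1_sig i) m then x0 else v i).
        split. { intro k. apply incr_strict; auto. }
        intros η Hη. destruct (Hc η Hη) as [K1 HK1]. destruct (Hc0 η Hη) as [K2 HK2].
        exists (max K1 K2). intros K HK i Hi.
        destruct (Nat.eq_dec (proj1_sig i) m) as [He|Hne].
        * destruct i as [j Hj]. simpl in He. subst j.
          rewrite (proof_irrelevance _ Hj Hm). apply HK2. lia.
        * apply HK1. pose proof (incr_ge ψ Hψ K). lia. lia.
      + exists φ, v. split; auto. intros η Hη. destruct (Hc η Hη) as [K0 HK0].
        exists K0. intros K HK i Hi. apply HK0; auto. destruct i; simpl in *; lia. }
  destruct (H r) as [φ [v [Hφ Hc]]]. exists φ, v. split; auto.
  intros η Hη. destruct (Hc η Hη) as [K0 HK0]. exists K0. intros K HK i.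
  apply HK0; auto. destruct i; simpl; auto.
Qed.

Lemma L1 r a : strictly_incr_pos r a -> multi_minimal_wrt M f r a -> Trans_is_whole M (Fs r a) f.
Proof.
  intros Hs Hmin x U HU [u0 Hu0] n.
  destruct (HU u0 Hu0) as [ε [Hε Hball]].
  set (T := prod_map M f r a).
  set (y := fun i : idx r => Nat.iter (n (proj1_sig i)) f x).
  set (c := fun _ : idx r => u0).
  exists (fun m => (1 <= m)%nat /\ clos r ε c (Nat.iter m T y)).
  split.
  2: { intros i m Hi [Hm1 Hm]. split.
       - pose proof (a_pos r a Hs i Hi). nia.
       - apply Hball. specialize (Hm (exist _ i Hi)). unfold T in Hm.
         rewrite Titer in Hm. unfold y, c in Hm; simpl in Hm.
         rewrite <- Nat.iter_add in Hm. exact Hm. }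
  split. { intros m [H _]; exact H. }
  apply NNPP; intro Hns.
  assert (Hp : forall N, exists p, (1 <= p)%nat /\ forall k, (p <= k <= p + N)%nat ->
                ~ clos r ε c (Nat.iter k T y)).
  { intro N. apply NNPP; intro H1. apply Hns. exists N. intros p Hp. apply NNPP; intro H2.
    apply H1. exists p. split; auto. intros k Hk Hc. apply H2. exists k. split; auto.
    split; auto. lia. }
  set (pf := fun N => proj1_sig (constructive_indefinite_description _ (Hp N))).
  assert (Hpf : forall N, (1 <= pf N)%nat /\ forall k, (pf N <= k <= pf N + N)%nat ->
                ~ clos r ε c (Nat.iter k T y))
    by (intro N; exact (proj2_sig (constructive_indefinite_description _ (Hp N)))).
  destruct (prod_seq_compact r (fun N => Nat.iter (pf N) T y)) as [φ [v [Hφ Hv]]].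
  set (B := fun w => forall k, ~ clos r (ε/2) c (Nat.iter k T w)).
  assert (HBv : B v).
  { intros k Hk. destruct (cont_T r a k v (ε/2)) as [δ [Hδ Hd]]; [lra|].
    destruct (Hv δ Hδ) as [K0 HK0].
    specialize (HK0 (max K0 k) ltac:(lia)). specialize (Hd _ HK0).
    pose proof (incr_ge φ Hφ (max K0 k)) as HφK.
    destruct (Hpf (φ (max K0 k))) as [_ Hno].
    apply (Hno (pf (φ (max K0 k)) + k)%nat). lia.
    rewrite Nat.add_comm, Nat.iter_add.
    intro i. specialize (Hk i). specialize (Hd i). fold T in Hd.
    pose proof (d_tri (c i) (Nat.iter k T v i) (Nat.iter k T (Nat.iter (pf (φ (Nat.max K0 k))) T y) i)).
    lra. }
  assert (Hclosed : prod_open M r (fun w => ~ B w)).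
  { intros w Hw. apply not_all_ex_not in Hw. destruct Hw as [k Hk]. apply NNPP in Hk.
    destruct (clos_open r c (ε/2) (Nat.iter k T w) Hk) as [η [Hη Hop]].
    destruct (cont_T r a k w η Hη) as [δ [Hδ Hd]].
    exists δ. split; auto. intros w' Hw' HB'. apply (HB' k). apply Hop. apply (Hd w' Hw'). }
  assert (Hinv : forall w, B w -> B (T w)).
  { intros w Hw k. unfold B. rewrite <- Nat.iter_succ_r. apply Hw. }
  apply (Hmin B Hclosed Hinv (ex_intro _ v HBv) c 0%nat).
  intro i. simpl. unfold c. rewrite d_refl0. lra.
Qed.

End Proofs.

Theorem theorem6p4 (M : Metric_Space) (f : Base M -> Base M) :
  compact_space M -> continuous_map M f -> inhabited (Base M) ->
  (forall (r : nat) (a : nat -> nat), strictly_incr_pos r a ->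
     (multi_minimal_wrt M f r a <-> F_point_transitive M (Fs r a) f) /\
     (F_point_transitive M (Fs r a) f <-> Trans_is_whole M (Fs r a) f)) /\
  ((multi_minimal M f <-> F_point_transitive M Fs_inf f) /\
   (F_point_transitive M Fs_inf f <-> Trans_is_whole M Fs_inf f)).
Proof.
  intros Hcomp Hcont Hinh.
  assert (sip : forall n, (1 <= n)%nat -> strictly_incr_pos n (fun j => S j)).
  { intros n Hn. split; [auto| split; [lia| intros; lia]]. }
  split; [|split; split].
  - intros r a Hs. split; split.
    + intro Hm. destruct Hinh as [x]. exists x. apply (L1 M f Hcont Hcomp r a Hs Hm).
    + intros [x Hx]. apply (L2 M f Hcont r a Hs x Hx).
    + intros [x Hx]. apply (L1 M f Hcont Hcomp r a Hs). apply (L2 M f Hcont r a Hs x Hx).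
    + intro Hw. destruct Hinh as [x]. exists x. apply Hw.
  - intro Hm. destruct Hinh as [x]. exists x. intros U HU Hne i Hi.
    apply (L1 M f Hcont Hcomp i _ (sip i Hi) (Hm i Hi) x U HU Hne).
  - intros [x Hx] n Hn. apply (L2 M f Hcont n _ (sip n Hn) x). intros U HU Hne. apply Hx; auto.
  - intros [x Hx] y U HU Hne i Hi.
    apply (L1 M f Hcont Hcomp i _ (sip i Hi)); auto.
    apply (L2 M f Hcont i _ (sip i Hi) x). intros U' HU' Hne'. apply Hx; auto.
  - intro Hw. destruct Hinh as [x]. exists x. apply Hw.
Qed.
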